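(* Let $(G,\precsim)$ be a compatible quasi-ordered abelian group such that $G^o$ is a direct summand of $G$ with complement $F$. Then $(F,\precsim|_F)$ is canonically isomorphic (via $f\mapsto f+G^o$) to the valued part $(G/G^o,\precsim)$ of $(G,\precsim)$, and the map $G^o\times F\to G$, $(a,f)\mapsto a+f$, is an isomorphism of quasi-ordered groups from $(G^o,\precsim|_{G^o})\boxtimes(F,\precsim|_F)$ onto $(G,\precsim)$.
   Context: A compatible quasi-ordered abelian group is an abelian group $G$ with a total quasi-order $\precsim$ (reflexive, transitive, any two elements comparable) such that, writing $a\sim b$ for $a\precsim b\wedge b\precsim a$: $(Q_1)$ $x\sim0\Rightarrow x=0$; $(Q_2)$ $x\precsim y\wedge y\not\sim z\Rightarrow x+z\precsim y+z$, for all $x,y,z$. With $cl(g)$ the $\sim$-class of $g$, $g$ is o-type if $cl(g)=\{g\}$ and $g$ is not of order $2$; $G^o$, the set of o-type elements, is a subgroup on which $\precsim$ is a group order. The valued part of $G$ is $G/G^o$ with the (valuational) quasi-order $g+G^o\precsim h+G^o\Leftrightarrow g-h\in G^o\vee(g-h\notin G^o\wedge g\precsim h)$. For an ordered abelian group $(A,\le)$ and an abelian group $F$ with a valuational quasi-order $\precsim_F$ (one of the form $a\precsim_F b\Leftrightarrow w(b)\le w(a)$ for a valuation $w$), the compatible product $(A,\le)\boxtimes(F,\precsim_F)$ is the group $A\times F$ with the quasi-order $(a,f)\precsim(a',f')\Leftrightarrow(f=f'=0\wedge a\le a')\vee(f'\neq0\wedge f\precsim_F f')$. An isomorphism of quasi-ordered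 groups is a group isomorphism $\phi$ with $x\precsim y\Leftrightarrow\phi(x)\precsim\phi(y)$. *)

(* Defs.v *)
From HB Require Import structures.
From mathcomp Require Import all_boot all_order all_algebra.
Set Implicit Arguments. Unset Strict Implicit. Unset Printing Implicit Defensive.
Import GRing.Theory.
Local Open Scope ring_scope.

Section QOG.
Variable G : zmodType.
Variable le : G -> G -> Prop.

Definition qsim (x y : G) : Prop := le x y /\ le y x.

Definition compatible_qo : Prop :=
  [/\ (forall x, le x x),
      (forall x y z, le x y -> le y z -> le x z),
      (forall x y, le x y \/ le y x),
      (forall x, qsim x 0 -> x = 0) &
      (forall x y z, le x y -> ~ qsim y z -> le (x + z) (y + z))].

Definition order2 (g : G) : Prop := g <> 0 /\ g + g = 0.

Definition otype (g : G) : Prop := (forall h, qsim h g -> h = g) /\ ~ order2 g.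

(* the valuational quasi-order on G/G^o, expressed on a quotient (Q, pi) of G
   by G^o: the quasi-order of the classes pi g, pi h *)
Definition valued_le (Q : zmodType) (pi : G -> Q) (x y : Q) : Prop :=
  exists g h, [/\ pi g = x, pi h = y &
     (otype (g - h) \/ (~ otype (g - h) /\ le g h))].

(* the compatible product (G^o, <=) [x] (F, <=|F) on pairs (a, f) *)
Definition cprod_le (a f a' f' : G) : Prop :=
  (f = 0 /\ f' = 0 /\ le a a') \/ (f' <> 0 /\ le f f').

End QOG.

(* Main.v *)
From Stdlib Require Import Classical.
Require Import Defs.
From HB Require Import structures.
From mathcomp Require Import all_boot all_order all_algebra.
Import GRing.Theory.
Local Open Scope ring_scope.

Theorem mainTheorem12 (G : zmodType) (le : G -> G -> Prop)
  (F : G -> Prop)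
  (Q : zmodType) (pi : {additive G -> Q}) :
  compatible_qo le ->
  (* F is a subgroup of G *)
  F 0 -> (forall x y, F x -> F y -> F (x - y)) ->
  (* F is a complement of G^o: G = G^o (+) F *)
  (forall x, F x -> otype le x -> x = 0) ->
  (forall g, exists a f, [/\ otype le a, F f & g = a + f]) ->
  (* (Q, pi) is the quotient G/G^o *)
  (forall y : Q, exists g, pi g = y) ->
  (forall g, pi g = 0 <-> otype le g) ->
  (* (1) f |-> f + G^o is an isomorphism (F, le|F) ~ (G/G^o, valued order) *)
  ((forall f f', F f -> F f' -> pi f = pi f' -> f = f') /\
   (forall y : Q, exists f, F f /\ pi f = y) /\
   (forall f f', F f -> F f' -> (le f f' <-> valued_le le pi (pi f) (pi f'))))
  /\
  (* (2) (a, f) |-> a + f is an isomorphism G^o [x] F ~ G *)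
  ((forall a f a' f', otype le a -> F f -> otype le a' -> F f' ->
        a + f = a' + f' -> a = a' /\ f = f') /\
   (forall g, exists a f, [/\ otype le a, F f & g = a + f]) /\
   (forall a f a' f', otype le a -> F f -> otype le a' -> F f' ->
        (cprod_le le a f a' f' <-> le (a + f) (a' + f')))).
Proof.
move=> [Hrefl Htr Htot HQ1 HQ2] HF0 HFB HFO Hdec Hsurj Hpi.
have O0 : otype le 0 by apply/Hpi; rewrite raddf0.
have OB : forall a b, otype le a -> otype le b -> otype le (a - b).
  by move=> a b /Hpi Ha /Hpi Hb; apply/Hpi; rewrite raddfB Ha Hb subr0.
have ON : forall a, otype le a -> otype le (- a).
  by move=> a Ha; rewrite -sub0r; apply: OB.
have NOB : forall x a, ~ otype le x -> otype le a -> ~ otype le (x + a).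
  move=> x a Hx Ha Hxa; apply: Hx.
  by have := OB _ _ Hxa Ha; rewrite addrK.
have Z0 : forall w, qsim le w 0 \/ qsim le 0 w -> w = 0.
  by move=> w [|[h1 h2]]; [apply: HQ1|apply: HQ1; split].
have Hsym : forall x, ~ otype le x -> qsim le x (- x).
  move=> x Hx.
  case: (classic (order2 x)) => [[_ H2]|H2].
    have -> : - x = x by apply/eqP; rewrite eq_sym -subr_eq0 opprK H2.
    by split; apply: Hrefl.
  have : ~ (forall h, qsim le h x -> h = x) by move=> H; apply: Hx; split.
  move=> /not_all_ex_not [h Hh].
  have [[hx xh] hneq] := imply_to_and _ _ Hh.
  apply: NNPP => Hn.
  have c1 : ~ qsim le h (- x).
    move=> [a b]; apply: Hn; split; [exact: Htr xh a| exact: Htr b hx].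
  have c2 : ~ qsim le x (- x) by [].
  have e1 := HQ2 _ _ _ xh c1; have e2 := HQ2 _ _ _ hx c2.
  rewrite subrr in e1 e2.
  apply: hneq; apply/eqP; rewrite -subr_eq0; apply/eqP; apply: Z0; left; by split.
have Hpos : forall x, ~ otype le x -> ~ le x 0.
  move=> x Hx hx0.
  have x0 : x <> 0 by move=> e; apply: Hx; rewrite e.
  have c : ~ qsim le 0 (- x).
    by move=> c; apply: x0; apply/eqP; rewrite -oppr_eq0; apply/eqP; apply: Z0; right.
  have := HQ2 _ _ _ hx0 c; rewrite subrr add0r => h.
  have [_ s] := Hsym x Hx.
  apply: x0; apply: Z0; left; split => //; exact: Htr h s.
have Oasym : forall a, otype le a -> qsim le a (- a) -> a = 0.
  move=> a [Ha1 Ha2] [s1 s2].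
  have e : - a = a by apply: Ha1; split.
  apply: NNPP => a0; apply: Ha2; split => //.
  by rewrite -{2}e subrr.
have K2 : forall a x, otype le a -> ~ otype le x -> ~ le x a.
  move=> a x Ha Hx hxa.
  case: (classic (a = 0)) => [e|a0]; first by apply: (Hpos x) => //; rewrite -e.
  have c : ~ qsim le a (- a) by move=> c; apply: a0; apply: Oasym.
  have := HQ2 _ _ _ hxa c; rewrite subrr.
  apply: Hpos; apply: NOB => //; exact: ON.
have Onn : forall w, otype le w -> le 0 w -> le 0 (- w) -> w = 0.
  move=> w Hw h1 h2.
  case: (classic (qsim le w (- w))) => [c|c]; first exact: Oasym.
  have := HQ2 _ _ _ h1 c; rewrite subrr add0r => h3.
  by apply/eqP; rewrite -oppr_eq0; apply/eqP; apply: Z0; left.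
have S : forall u v, ~ otype le u -> ~ otype le v -> ~ le v u -> le 0 (v - u).
  move=> u v Hu Hv nvu.
  have uv : le u v by case: (Htot u v).
  have c : ~ qsim le v (- u).
    move=> [a _]; apply: nvu; have [_ s2] := Hsym u Hu; exact: Htr a s2.
  by have := HQ2 _ _ _ uv c; rewrite subrr.
have K' : forall u v, ~ otype le u -> ~ otype le v -> otype le (v - u) -> le v u.
  move=> u v Hu Hv Hvu; apply: NNPP => nvu.
  have h1 := S u v Hu Hv nvu.
  have Hu' : ~ otype le (- u) by move=> h; apply: Hu; rewrite -[u]opprK; apply: ON.
  have Hv' : ~ otype le (- v) by move=> h; apply: Hv; rewrite -[v]opprK; apply: ON.
  have nvu' : ~ le (- v) (- u).
    move=> h; apply: nvu.
    have [s1 _] := Hsym v Hv; have [_ s2] := Hsym u Hu.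
    exact: Htr s1 (Htr _ _ _ h s2).
  have h2 := S _ _ Hu' Hv' nvu'.
  have e : v - u = 0 by apply: Onn => //; rewrite opprB; move: h2; rewrite opprK addrC.
  by apply: nvu; move/eqP: e; rewrite subr_eq0 => /eqP ->.
have K : forall x a, ~ otype le x -> otype le a -> qsim le x (x + a).
  move=> x a Hx Ha; have Hy := NOB x a Hx Ha.
  split; apply: K' => //; last by rewrite addrAC subrr add0r.
  by rewrite opprD addrA subrr sub0r; apply: ON.
have Finj : forall f f', F f -> F f' -> pi f = pi f' -> f = f'.
  move=> f f' Hf Hf' e; apply/eqP; rewrite -subr_eq0; apply/eqP.
  by apply: HFO; [apply: HFB|apply/Hpi; rewrite raddfB e subrr].
have FnO : forall f, F f -> f <> 0 -> ~ otype le f.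
  by move=> f Hf f0 Ho; apply: f0; apply: HFO.
have FnOa : forall a f, otype le a -> F f -> f <> 0 -> ~ otype le (a + f).
  by move=> a f Ha Hf f0; rewrite addrC; apply: NOB => //; apply: FnO.
have Fsub : forall f f', F f -> F f' -> F (f - f') by [].
split; [split; [exact: Finj|split]|split; [|split => //]].
- move=> y; have [g <-] := Hsurj y; have [a [f [Ha Hf ->]]] := Hdec g.
  exists f; split => //; rewrite raddfD.
  by move/Hpi: Ha => ->; rewrite add0r.
- move=> f f' Hf Hf'; split.
    move=> h; exists f, f'; split => //.
    case: (classic (otype le (f - f'))) => c; [by left|by right].
  move=> [g [h [eg eh H]]].
  have [a [g' [Ha Hg' eg']]] := Hdec g.
  have [b [h' [Hb Hh' eh']]] := Hdec h.
  have pa : pi a = 0 by apply/Hpi.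
  have pb : pi b = 0 by apply/Hpi.
  have gf : g' = f by apply: Finj => //; rewrite -eg eg' raddfD pa add0r.
  have hf : h' = f' by apply: Finj => //; rewrite -eh eh' raddfD pb add0r.
  subst g h g' h'.
  case: H => [Ho|[Hno Hle]].
    have -> : f = f'.
      apply: Finj => //; move/Hpi: Ho; rewrite raddfB => /eqP.
      by rewrite subr_eq0 => /eqP; rewrite !raddfD pa pb !add0r.
    exact: Hrefl.
  case: (classic (f' = 0)) => [f'0|f'0].
    case: (classic (f = 0)) => [f0|f0]; first by rewrite f0 f'0; apply: Hrefl.
    exfalso; apply: (K2 (b + f') (a + f)) => //; last exact: FnOa.
    by rewrite f'0 addr0.
  case: (classic (f = 0)) => [f0|f0].
    rewrite f0; case: (Htot 0 f') => // h; exfalso; exact: K2 O0 (FnO _ Hf' f'0) h.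
  have [k1 k2] := K f a (FnO _ Hf f0) Ha.
  have [k3 k4] := K f' b (FnO _ Hf' f'0) Hb.
  rewrite addrC in Hle; rewrite [b + _]addrC in Hle.
  exact: Htr k1 (Htr _ _ _ Hle k4).
- move=> a f a' f' Ha Hf Ha' Hf' e.
  have ff : f = f'.
    apply: Finj => //.
    have := congr1 pi e; rewrite !raddfD.
    by move/Hpi: Ha => ->; move/Hpi: Ha' => ->; rewrite !add0r.
  by subst f'; split => //; move/addIr: e.
- move=> a f a' f' Ha Hf Ha' Hf'; split.
    case=> [[-> [-> h]]|[f'0 h]]; first by rewrite !addr0.
    have [k3 k4] := K f' a' (FnO _ Hf' f'0) Ha'.
    rewrite [a' + _]addrC; apply: (fun hh => Htr _ _ _ hh k3).
    case: (classic (f = 0)) => [f0|f0].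
      rewrite f0 addr0; case: (Htot a f') => // h'; exfalso.
      exact: K2 Ha (FnO _ Hf' f'0) h'.
    have [k1 k2] := K f a (FnO _ Hf f0) Ha.
    by rewrite addrC; exact: Htr k2 h.
  move=> h.
  case: (classic (f' = 0)) => [f'0|f'0].
    case: (classic (f = 0)) => [f0|f0].
      by left; split => //; split => //; move: h; rewrite f0 f'0 !addr0.
    by exfalso; apply: (K2 a' (a + f) Ha'); [exact: FnOa|rewrite f'0 addr0 in h].
  right; split => //.
  have [k3 k4] := K f' a' (FnO _ Hf' f'0) Ha'.
  rewrite [a' + _]addrC in h.
  case: (classic (f = 0)) => [f0|f0].
    rewrite f0; case: (Htot 0 f') => // h'; exfalso; exact: K2 O0 (FnO _ Hf' f'0) h'.
  have [k1 k2] := K f a (FnO _ Hf f0) Ha.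
  rewrite [a + f]addrC in h; exact: Htr k1 (Htr _ _ _ h k4).
Qed.
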